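(* For every $k\ge 0$, as formal power series in $x$, $$\sum_{n} L(n,k)x^n=\sum_{n}L(n,n-k)x^n=\frac{x^k e_k(x)}{(1-x)^{k+1}(1+x)^k}.$$
   Context: $e(n,j)$ is the number of $j$-element subsets of $\{1,\dots,n\}$ with even sum (the empty set counts as even), and $e_k(x)=\sum_{j=0}^k e(k,j)x^j$. Losanitsch's triangle $(L(n,k))_{n,k\ge 0}$ is defined by $L(0,k)=[k=0]$, $L(1,k)=[k\le 1]$ for $k\ge0$, $L(n,k)=0$ for $k<0$, and for $n\ge 2$ and all $k$: $L(n,k)=L(n-2,k)+\binom{n-2}{k-1}+L(n-2,k-2)$, where $\binom{m}{j}=0$ for $j<0$ or $j>m$. The sums are over $n\ge 0$ (terms with $n-k<0$ or $n<k$ vanish). *)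

(* Defs.v *)
From mathcomp Require Import all_boot all_order all_algebra.
Set Implicit Arguments. Unset Strict Implicit. Unset Printing Implicit Defensive.
Import Order.TTheory GRing.Theory Num.Theory.
Local Open Scope ring_scope.

Definition binz (m : nat) (j : int) : nat :=
  match j with Posz j' => 'C(m, j') | Negz _ => 0%N end.

(* Losanitsch's triangle L(n,k), k an integer (L(n,k) = 0 for k < 0). *)
Fixpoint Los (n : nat) (k : int) : nat :=
  match n with
  | 0 => (k == 0)
  | 1 => (k == 0) || (k == 1)
  | n'.+2 => (Los n' k + binz n' (k - 1) + Los n' (k - 2))%N
  end.

(* e(n,j): number of j-element subsets of {1,...,n} with even sum;
   element i : 'I_n represents the number i+1. *)
Definition e_cnt (n j : nat) : nat :=
  #|[set A : {set 'I_n} | (#|A| == j) && ~~ odd (\sum_(i in A) i.+1)]|.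

Definition e_poly (k : nat) : {poly rat} :=
  \sum_(j < k.+1) (e_cnt k j)%:R *: 'X^j.

Definition fps := nat -> rat.

Definition fps_of_poly (p : {poly rat}) : fps := fun n => p`_n.

Definition fps_mul (a b : fps) : fps :=
  fun n => \sum_(i < n.+1) a i * b (n - i)%N.

(* Coefficients b_0..b_n of the inverse of a (a 0 assumed nonzero):
   b_0 = 1/a_0,  b_m = -(1/a_0) * \sum_{i=1}^m a_i b_{m-i}. *)
Definition fps_inv_step (a : fps) (s : seq rat) : seq rat :=
  let m := size s in
  rcons s (- (a 0%N)^-1 * \sum_(1 <= i < m.+1) a i * nth 0 s (m - i)%N).

Definition fps_inv_seq (a : fps) (n : nat) : seq rat :=
  iter n (fps_inv_step a) [:: (a 0%N)^-1].

Definition fps_inv (a : fps) : fps := fun n => nth 0 (fps_inv_seq a n) n.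

Definition rhs_series (k : nat) : fps :=
  fps_mul (fps_of_poly ('X^k * e_poly k))
          (fps_inv (fps_of_poly ((1 - 'X) ^+ k.+1 * (1 + 'X) ^+ k))).

(* Main.v *)
Require Import Defs.
From mathcomp Require Import all_boot all_order all_algebra.
From mathcomp Require Import ring zify.
Set Implicit Arguments. Unset Strict Implicit. Unset Printing Implicit Defensive.
Import Order.TTheory GRing.Theory Num.Theory.
Local Open Scope ring_scope.

Definition tp (a : fps) (m : nat) : {poly rat} := \poly_(i < m.+1) a i.

Lemma coef_tp a m i : (i <= m)%N -> (tp a m)`_i = a i.
Proof. by move=> h; rewrite /tp coef_poly ltnS h. Qed.

Lemma fps_mulL (p q : {poly rat}) (a b : fps) m :
  (forall i, (i <= m)%N -> p`_i = a i) -> (forall i, (i <= m)%N -> q`_i = b i) ->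
  fps_mul a b m = (p * q)`_m.
Proof.
move=> hp hq; rewrite coefM /fps_mul; apply: eq_bigr => i _.
by rewrite hp ?hq // ?leq_subr // -ltnS.
Qed.

Lemma fps_mul_poly p q m : fps_mul (fps_of_poly p) (fps_of_poly q) m = (p * q)`_m.
Proof. exact: fps_mulL. Qed.

Lemma fps_mul_tp p a m : fps_mul (fps_of_poly p) a m = (p * tp a m)`_m.
Proof. by apply: fps_mulL => // i /coef_tp. Qed.

Lemma fps_mul_ext a b c m : (forall i, b i = c i) -> fps_mul a b m = fps_mul a c m.
Proof. by move=> h; apply: eq_bigr => i _; rewrite h. Qed.

Lemma fps_mulD a b c m : fps_mul a (fun i => b i + c i) m = fps_mul a b m + fps_mul a c m.
Proof. by rewrite /fps_mul -big_split /=; apply: eq_bigr => i _; rewrite mulrDr. Qed.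

Lemma fps_mulA (P D : {poly rat}) a m :
  fps_mul (fps_of_poly (P * D)) a m =
  fps_mul (fps_of_poly P) (fun i => fps_mul (fps_of_poly D) a i) m.
Proof.
rewrite fps_mul_tp -mulrA; symmetry; apply: (fps_mulL (p := P) (q := D * tp a m)) => // i him.
by symmetry; apply: fps_mulL => // j hj; rewrite coef_tp // (leq_trans hj).
Qed.

Lemma rep_mul (P D N : {poly rat}) a m :
  (forall i, fps_mul (fps_of_poly D) a i = N`_i) ->
  fps_mul (fps_of_poly (P * D)) a m = (P * N)`_m.
Proof. by move=> h; rewrite fps_mulA (fps_mul_ext _ _ h) fps_mul_poly. Qed.

Definition shift (s : nat) (a : fps) : fps := fun n => if (s <= n)%N then a (n - s)%N else 0.

Lemma fps_mulXn s a m : fps_mul (fps_of_poly 'X^s) a m = shift s a m.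
Proof.
rewrite fps_mul_tp coefXnM /shift; case: ltnP => h //.
by rewrite coef_tp // leq_subr.
Qed.

Lemma fps_mul_shift P s a m :
  fps_mul (fps_of_poly P) (shift s a) m = fps_mul (fps_of_poly (P * 'X^s)) a m.
Proof. by rewrite fps_mulA; apply: fps_mul_ext => i; rewrite fps_mulXn. Qed.

Lemma fps_mul_diff s a m :
  fps_mul (fps_of_poly (1 - 'X^s)) a m = a m - shift s a m.
Proof.
by rewrite fps_mul_tp mulrBl mul1r coefB coef_tp // -fps_mulXn fps_mul_tp.
Qed.

Lemma size_inv_seq a n : size (fps_inv_seq a n) = n.+1.
Proof. by elim: n => //= n IH; rewrite /fps_inv_step size_rcons IH. Qed.

Lemma inv_seq_stable a n j : (j <= n)%N -> nth 0 (fps_inv_seq a n) j = fps_inv a j.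
Proof.
elim: n => [|n IH]; first by rewrite leqn0 => /eqP ->.
rewrite leq_eqVlt => /orP[/eqP -> //|hj].
rewrite /= /fps_inv_step nth_rcons size_inv_seq hj; exact: IH.
Qed.

Lemma fps_invS a m : fps_inv a m.+1 =
  - (a 0%N)^-1 * \sum_(i < m.+1) a i.+1 * fps_inv a (m - i)%N.
Proof.
rewrite /fps_inv /= /fps_inv_step nth_rcons size_inv_seq ltnn eqxx.
rewrite big_add1 /= big_mkord; congr (_ * _); apply: eq_bigr => i _.
by rewrite subSS inv_seq_stable // leq_subr.
Qed.

Lemma fps_inv_ok a m : a 0%N != 0 ->
  fps_mul a (fps_inv a) m = (m == 0)%:R.
Proof.
move=> a0; case: m => [|m].
  by rewrite /fps_mul big_ord1 /fps_inv /= mulfV.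
rewrite /fps_mul big_ord_recl /= subn0 fps_invS mulrA mulrN mulfV // mulN1r.
by rewrite addrC; apply/eqP; rewrite subr_eq0; apply/eqP; apply: eq_bigr => i _.
Qed.

Lemma agreeL (p p' q : {poly rat}) m :
  (forall i, (i <= m)%N -> p`_i = p'`_i) -> (p * q)`_m = (p' * q)`_m.
Proof. by move=> h; rewrite !coefM; apply: eq_bigr => i _; rewrite h // -ltnS. Qed.

Lemma agreeR (p q q' : {poly rat}) m :
  (forall i, (i <= m)%N -> q`_i = q'`_i) -> (p * q)`_m = (p * q')`_m.
Proof. by move=> h; rewrite !coefM; apply: eq_bigr => i _; rewrite h // leq_subr. Qed.

Lemma rep_inv (D N : {poly rat}) (a : fps) m :
  D`_0 != 0 ->
  (forall i, fps_mul (fps_of_poly D) a i = N`_i) ->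
  a m = fps_mul (fps_of_poly N) (fps_inv (fps_of_poly D)) m.
Proof.
move=> D0 h; rewrite fps_mul_tp.
rewrite (@agreeL _ (D * tp a m) _ m); last first.
  by move=> i hi; rewrite -h; apply: fps_mulL => // j hj; rewrite coef_tp // (leq_trans hj).
rewrite (mulrC D) -mulrA (@agreeR _ _ 1 m) ?mulr1 ?coef_tp //.
move=> i hi; rewrite coef1 -(fps_inv_ok i D0); symmetry.
by apply: fps_mulL => // j hj; rewrite coef_tp // (leq_trans hj).
Qed.

Lemma prod_expand k (c : 'I_k -> {poly rat}) :
  \prod_(i < k) (c i * 'X + 1) = \sum_(A : {set 'I_k}) (\prod_(i in A) c i) * 'X^#|A|.
Proof.
rewrite bigA_distr; apply: eq_bigr => A _.
by rewrite -big_mkcond /= big_split /= prodr_const.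
Qed.

Definition Pm (k : nat) : {poly rat} := \prod_(i < k) ((-1) ^+ i.+1 * 'X + 1).

Lemma e_sets k : e_poly k =
  \sum_(A : {set 'I_k}) (if ~~ odd (\sum_(i in A) i.+1)%N then 'X^#|A| else 0).
Proof.
rewrite /e_poly /e_cnt.
transitivity (\sum_(j < k.+1) \sum_(A : {set 'I_k})
   (if (#|A| == j) && ~~ odd (\sum_(i in A) i.+1)%N then 'X^#|A| else 0 : {poly rat})).
  apply: eq_bigr => j _.
  rewrite -big_mkcond /= cardsE -sum1_card natr_sum scaler_suml.
  by apply: eq_bigr => A /andP[/eqP -> _]; rewrite scale1r.
rewrite exchange_big /=; apply: eq_bigr => A _.
have hA : (#|A| < k.+1)%N by rewrite ltnS (leq_trans (max_card _)) ?card_ord.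
rewrite (bigD1 (Ordinal hA)) //= eqxx /= [X in _ + X]big1 ?addr0 // => j hj.
by case: eqP => // h; move: hj; rewrite -val_eqE /= h eqxx.
Qed.

Lemma e_formula k : 2%:R * e_poly k = (1 + 'X) ^+ k + Pm k.
Proof.
have h1 : (1 + 'X : {poly rat}) ^+ k = \sum_(A : {set 'I_k}) 'X^#|A|.
  rewrite -[in LHS](card_ord k) -prodr_const.
  rewrite (eq_bigr (fun i : 'I_k => (1 : {poly rat}) * 'X + 1)); last by move=> i _; rewrite mul1r addrC.
  by rewrite prod_expand; apply: eq_bigr => A _; rewrite prodr_const expr1n mul1r.
rewrite h1 /Pm prod_expand e_sets mulr_sumr -big_split /=; apply: eq_bigr => A _.
rewrite prodrXr -signr_odd.
case: (odd _); rewrite /= ?expr1 ?mulr0 ?mulN1r ?subrr ?expr0 ?mul1r //.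
by rewrite mulr2n mulrDl mul1r.
Qed.

Lemma Pm_rec k : Pm k.+2 = Pm k * (1 - 'X^2).
Proof.
rewrite /Pm !big_ord_recr /= -mulrA; congr (_ * _).
set s : {poly rat} := (-1) ^+ k.+1.
have -> : (-1 : {poly rat}) ^+ k.+2 = - s by rewrite exprS mulN1r.
have ss : s * s = 1 by rewrite /s -expr2 -exprM mulnC exprM expr2 mulN1r opprK expr1n.
transitivity (1 - (s * s) * 'X^2); first by ring.
by rewrite ss mul1r.
Qed.

Lemma two_neq0 : (2%:R : {poly rat}) != 0.
Proof. by rewrite -polyC_natr polyC_eq0. Qed.

Lemma e_rec k : e_poly k.+2 = 'X * (1 + 'X) ^+ k.+1 + (1 - 'X^2) * e_poly k.
Proof.
apply: (mulfI two_neq0); rewrite e_formula mulrDr [_ * (_ * e_poly k)]mulrCA e_formula Pm_rec.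
rewrite !exprS; ring.
Qed.

Lemma e0 : e_poly 0 = 1.
Proof.
apply: (mulfI two_neq0); rewrite e_formula /Pm big_ord0 mulr1 expr0; ring.
Qed.

Lemma e1 : e_poly 1 = 1.
Proof.
apply: (mulfI two_neq0); rewrite e_formula /Pm big_ord1 /= expr1 mulr1 expr1 mulN1r; ring.
Qed.

Definition Bin (j : nat) : fps := fun n => ('C(n, j))%:R.

Lemma fps_mul_diff1 a m :
  fps_mul (fps_of_poly (1 - 'X)) a m = a m - shift 1 a m.
Proof. by rewrite -fps_mul_diff expr1. Qed.

Lemma fps_mul_shift1 P a m :
  fps_mul (fps_of_poly P) (shift 1 a) m = fps_mul (fps_of_poly (P * 'X)) a m.
Proof. by rewrite fps_mul_shift expr1. Qed.

Lemma rep_bin j m : fps_mul (fps_of_poly ((1 - 'X) ^+ j.+1)) (Bin j) m = ('X^j)`_m.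
Proof.
elim: j m => [|j IH] m.
  rewrite expr1 fps_mul_diff1 expr0 coef1 /shift /Bin.
  by case: m => [|m] //=; rewrite !bin0 subrr.
rewrite exprS mulrC fps_mulA.
rewrite (fps_mul_ext _ _ (c := shift 1 (Bin j))); last first.
  move=> i; rewrite fps_mul_diff1 /shift /Bin; case: i => [|i] //=.
  by rewrite subn1 /= binS natrD addrAC subrr add0r.
by rewrite fps_mul_shift1 mulrC (rep_mul _ _ IH) exprS.
Qed.

Definition G (k : nat) : fps := fun n => (Los n k)%:R.
Definition Dk (k : nat) : {poly rat} := (1 - 'X) ^+ k.+1 * (1 + 'X) ^+ k.
Definition Nk (k : nat) : {poly rat} := 'X^k * e_poly k.

Lemma binz_neg n (k : int) : (k < 0)%R -> binz n k = 0%N.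
Proof. by case: k. Qed.

Lemma Los_neg n (k : int) : (k < 0)%R -> Los n k = 0%N.
Proof.
elim/ltn_ind: n k => n IH k hk.
case: n IH => [|[|n]] IH /=.
- by case: k hk.
- by case: k hk => // -[].
have h1 : (k - 1 < 0)%R by lia.
have h2 : (k - 2 < 0)%R by lia.
by rewrite !IH // binz_neg.
Qed.

Lemma Los0 n : Los n 0 = 1%N.
Proof.
elim/ltn_ind: n => -[|[|n]] IH //=.
by rewrite IH // !Los_neg.
Qed.

Lemma Los1 n : Los n.+2 1%Z = (Los n 1%Z).+1.
Proof. by rewrite /= (@Los_neg n (1 - 2)) // addn0 ?subnn bin0 addn1. Qed.

Lemma rep_G0 m : fps_mul (fps_of_poly (Dk 0)) (G 0) m = (Nk 0)`_m.
Proof.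
rewrite /Dk /Nk expr1 expr0 mulr1 fps_mul_diff1 e0 expr0 mulr1 coef1 /shift /G.
by rewrite !Los0; case: m => [|m] /=; rewrite ?subrr ?subr0.
Qed.

Lemma rep_G1 m : fps_mul (fps_of_poly (Dk 1)) (G 1) m = (Nk 1)`_m.
Proof.
have -> : Dk 1 = (1 - 'X) * (1 - 'X^2) by rewrite /Dk; ring.
rewrite fps_mulA.
rewrite (fps_mul_ext _ _ (c := fun i => (0 < i)%N%:R)); last first.
  move=> i; rewrite fps_mul_diff /shift /G.
  case: i => [|[|i]] //; rewrite ?subrr //.
  have -> : (i.+2 - 2 = i)%N by lia.
  by rewrite Los1 /= -addn1 natrD addrAC subrr add0r.
apply: etrans (fps_mul_diff1 _ _) _; rewrite /Nk e1 mulr1 expr1 coefX /shift.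
by case: m => [|[|m]] //=; rewrite ?subrr ?subr0.
Qed.

Lemma Los_rec2 n k : Los n.+2 (Posz k.+2) = (Los n k.+2 + 'C(n, k.+1) + Los n k)%N.
Proof.
rewrite [LHS]/= subn1 /=; congr (_ + _ + Los n _)%N; lia.
Qed.

Lemma rep_G_step k m :
  (forall i, fps_mul (fps_of_poly (Dk k)) (G k) i = (Nk k)`_i) ->
  fps_mul (fps_of_poly (Dk k.+2)) (G k.+2) m = (Nk k.+2)`_m.
Proof.
move=> IH.
set Q : {poly rat} := (1 - 'X) ^+ k.+2 * (1 + 'X) ^+ k.+1.
have -> : Dk k.+2 = Q * (1 - 'X^2) by rewrite /Dk /Q !exprS; ring.
rewrite fps_mulA.
rewrite (fps_mul_ext _ _ (c := shift 2%N (fun n => Bin k.+1 n + G k n))); last first.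
  move=> i; apply: etrans (fps_mul_diff _ _ _) _; rewrite /shift /G /Bin.
  case: i => [|[|i]] //.
  have -> : (i.+2 - 2 = i)%N by lia.
  by rewrite Los_rec2 !natrD /=; ring.
apply: etrans (fps_mul_shift _ _ _ _) _; rewrite fps_mulD.
have -> : Q * 'X^2 = ('X^2 * (1 + 'X) ^+ k.+1) * (1 - 'X) ^+ k.+2 by rewrite /Q; ring.
rewrite (rep_mul _ _ (rep_bin k.+1)).
have -> : 'X^2 * (1 + 'X) ^+ k.+1 * (1 - 'X) ^+ k.+2 = ('X^2 * (1 - 'X^2)) * Dk k
  by rewrite /Dk !exprS; ring.
rewrite (rep_mul _ _ IH) -coefD /Nk e_rec; apply: (congr1 (fun p : {poly rat} => p`_m)); rewrite !exprS; ring.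
Qed.

Lemma rep_G k m : fps_mul (fps_of_poly (Dk k)) (G k) m = (Nk k)`_m.
Proof.
suff : (forall i, fps_mul (fps_of_poly (Dk k)) (G k) i = (Nk k)`_i) /\
       (forall i, fps_mul (fps_of_poly (Dk k.+1)) (G k.+1) i = (Nk k.+1)`_i).
  by case=> h _; apply: h.
elim: k => [|k [h1 h2]]; first by split; [exact: rep_G0 | exact: rep_G1].
by split=> // i; apply: rep_G_step.
Qed.

Lemma coef0_pow (c : rat) n : (((1 + c *: 'X) : {poly rat}) ^+ n)`_0 = 1.
Proof.
elim: n => [|n IH]; first by rewrite expr0 coef1.
by rewrite exprS coef0M IH coefD coef1 coefZ coefX mulr0 addr0 mulr1.
Qed.

Lemma Dk0 k : (Dk k)`_0 != 0.
Proof.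
have -> : Dk k = (1 + (-1) *: 'X) ^+ k.+1 * (1 + 1 *: 'X) ^+ k
  by rewrite /Dk scaleN1r scale1r.
by rewrite coef0M !coef0_pow mulr1 oner_eq0.
Qed.

Lemma binz_sym n (j : int) : binz n (Posz n - j) = binz n j.
Proof.
case: j => [j|p].
  case: (leqP j n) => hj.
    have -> : (Posz n - Posz j)%R = Posz (n - j) by lia.
    by rewrite /= bin_sub.
  have : (Posz n - Posz j < 0)%R by lia.
  by move=> /(binz_neg n) ->; rewrite /= bin_small.
have -> : (Posz n - Negz p)%R = Posz (n + p.+1) by rewrite NegzE opprK PoszD.
by rewrite /= bin_small // addnS ltnS leq_addr.
Qed.

Lemma Los_sym n (k : int) : Los n (Posz n - k) = Los n k.
Proof.
elim/ltn_ind: n k => -[|[|n]] IH k.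
- by rewrite /= sub0r oppr_eq0.
- rewrite /=; congr nat_of_bool.
  have -> : (1 - k == 0) = (k == 1) by apply/eqP/eqP; lia.
  have -> : (1 - k == 1) = (k == 0) by apply/eqP/eqP; lia.
  by rewrite orbC.
transitivity (Los n (Posz n - (k - 2)) + binz n (Posz n - (k - 1)) + Los n (Posz n - k))%N.
  by rewrite [LHS]/=; congr (Los n _ + binz n _ + Los n _)%N; lia.
rewrite !IH // binz_sym /=; lia.
Qed.

Theorem proposition3p3 (k : nat) :
  (forall n : nat, ((Los n k)%:R : rat) = rhs_series k n) /\
  (forall n : nat, ((Los n (n%:Z - k%:Z))%:R : rat) = rhs_series k n).
Proof.
have h1 : forall n : nat, ((Los n k)%:R : rat) = rhs_series k n.
  by move=> n; exact: (rep_inv n (Dk0 k) (rep_G k)).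
split=> // n; rewrite (Los_sym n k); exact: h1.
Qed.
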